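(* Let $V\subset\mathbb{R}^n$ be a singular irreducible central real algebraic variety. Then the ring $\mathcal{R}^0(V)$ of continuous rational functions on $V$ has the weak substitution property on points over $\mathbb{R}[V]$: every ring homomorphism $\mathbb{R}[V]\to\mathbb{R}$ admits one and only one extension to a ring homomorphism $\mathcal{R}^0(V)\to\mathbb{R}$.
   Context: $V$ is central if its non-singular points are dense in $V$ for the Euclidean topology. $\mathcal{R}^0(V)$ consists of the continuous functions $V\to\mathbb{R}$ whose restriction to some non-empty Zariski open subset of $V$ is regular. *)

(* Defs.v *)
From mathcomp Require Import all_boot all_algebra.
From mathcomp Require Import Rstruct.
From mathcomp Require Import mpoly.
Set Implicit Arguments. Unset Strict Implicit. Unset Printing Implicit Defensive.
Import GRing.Theory Num.Theory.
Local Open Scope ring_scope.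

Notation RR := Rdefinitions.R.

Definition point (n : nat) := 'I_n -> RR.
Definition rset (n : nat) := point n -> Prop.

Definition sqdist n (x y : point n) : RR := \sum_(i < n) (x i - y i) ^+ 2.

Definition is_algebraic n (V : rset n) : Prop :=
  exists s : seq {mpoly RR[n]}, forall x, V x <-> (forall p, p \in s -> p.@[x] = 0).

Definition vanishing_ideal n (V : rset n) : {mpoly RR[n]} -> Prop :=
  fun p => forall x, V x -> p.@[x] = 0.

Definition is_irreducible n (V : rset n) : Prop :=
  is_algebraic V /\ (exists x, V x) /\
  forall W1 W2 : rset n, is_algebraic W1 -> is_algebraic W2 ->
    (forall x, V x <-> (W1 x \/ W2 x)) ->
    (forall x, V x <-> W1 x) \/ (forall x, V x <-> W2 x).

Definition is_ideal n (P : {mpoly RR[n]} -> Prop) : Prop :=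
  P 0 /\ (forall p q, P p -> P q -> P (p + q)) /\ (forall p q, P q -> P (p * q)).
Definition is_prime_ideal n (P : {mpoly RR[n]} -> Prop) : Prop :=
  is_ideal P /\ ~ P 1 /\ (forall p q, P (p * q) -> P p \/ P q).

(* dimension of V = Krull dimension of R[V] = R[X]/I(V): chains of prime ideals
   P_0 < P_1 < ... < P_d of R[X] containing I(V) *)
Definition prime_chain n (V : rset n) (d : nat) (C : nat -> {mpoly RR[n]} -> Prop) :=
  (forall i, (i <= d)%N -> is_prime_ideal (C i) /\ (forall p, vanishing_ideal V p -> C i p)) /\
  (forall i, (i < d)%N -> (forall p, C i p -> C i.+1 p) /\ exists p, C i.+1 p /\ ~ C i p).
Definition alg_dim n (V : rset n) (d : nat) : Prop :=
  (exists C, prime_chain V d C) /\ (forall d' C, prime_chain V d' C -> (d' <= d)%N).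

Definition generates n (s : seq {mpoly RR[n]}) (I : {mpoly RR[n]} -> Prop) : Prop :=
  (forall p, p \in s -> I p) /\
  (forall p, I p -> exists g : seq {mpoly RR[n]},
      p = \sum_(i < size s) g`_i * s`_i).

Definition jacobian n (s : seq {mpoly RR[n]}) (x : point n) : 'M[RR]_(size s, n) :=
  \matrix_(i < size s, j < n) (mderiv j s`_i).@[x].

(* non-singular point (BCR Def. 3.3.9): x in V, I(V) generated by f_1..f_s,
   rank of the Jacobian at x equals n - dim V *)
Definition nonsingular_point n (V : rset n) (x : point n) : Prop :=
  V x /\ exists d, alg_dim V d /\
    exists s, generates s (vanishing_ideal V) /\ \rank (jacobian s x) = (n - d)%N.

Definition is_singular n (V : rset n) : Prop :=
  exists x, V x /\ ~ nonsingular_point V x.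

Definition is_central n (V : rset n) : Prop :=
  forall x, V x -> forall eps : RR, 0 < eps ->
    exists y, nonsingular_point V y /\ sqdist x y < eps.

Definition pts n (V : rset n) := {x : point n | V x}.

(* R[V]: polynomial functions on V (≅ R[X]/I(V)) *)
Definition is_polyfun n (V : rset n) (f : pts V -> RR) : Prop :=
  exists p : {mpoly RR[n]}, forall x : pts V, f x = p.@[sval x].

Definition continuous_on_V n (V : rset n) (f : pts V -> RR) : Prop :=
  forall (x : pts V) (eps : RR), 0 < eps -> exists delta : RR, 0 < delta /\
    forall y : pts V, sqdist (sval x) (sval y) < delta -> `|f y - f x| < eps.

(* R^0(V): continuous functions on V whose restriction to some nonempty
   Zariski open subset U = V \ W (W algebraic) of V is regular (= p/q, q nonvanishing on U) *)
Definition is_R0 n (V : rset n) (f : pts V -> RR) : Prop :=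
  continuous_on_V f /\
  exists W : rset n, is_algebraic W /\ (exists x : pts V, ~ W (sval x)) /\
    exists p q : {mpoly RR[n]}, forall x : pts V, ~ W (sval x) ->
      q.@[sval x] != 0 /\ f x = p.@[sval x] / q.@[sval x].

Definition ring_hom_on n (V : rset n) (S : (pts V -> RR) -> Prop)
    (phi : (pts V -> RR) -> RR) : Prop :=
  (forall f g, S f -> S g -> phi (fun x => f x + g x) = phi f + phi g) /\
  (forall f g, S f -> S g -> phi (fun x => f x * g x) = phi f * phi g) /\
  phi (fun _ => 1) = 1.

(* Main.v *)
Require Import Defs.
From mathcomp Require Import all_boot all_algebra.
From mathcomp Require Import Rstruct.
From mathcomp Require Import mpoly.
From mathcomp Require Import all_order ring lra.
From Stdlib Require Import FunctionalExtensionality ProofIrrelevance.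
Import GRing.Theory Num.Theory Order.TTheory.
Set Implicit Arguments. Unset Strict Implicit. Unset Printing Implicit Defensive.
Local Open Scope ring_scope.

Lemma ring_endo_id (s : RR -> RR) : (forall x y, s (x+y) = s x + s y) ->
  (forall x y, s (x*y) = s x * s y) -> s 1 = 1 -> forall x, s x = x.
Proof.
move=> sD sM s1.
have s0 : s 0 = 0.
  by have := sD 0 0; rewrite addr0 => h; lra.
have sN x : s (- x) = - s x.
  by have := sD x (- x); rewrite subrr s0 => h; lra.
have sB x y : s (x - y) = s x - s y by rewrite sD sN.
have sn (k : nat) : s k%:R = k%:R.
  by elim: k => [|k IH]; rewrite ?s0 // -addn1 natrD sD IH s1.
have sz (k : int) : s k%:~R = k%:~R.
  case: k => k; first by rewrite sn.
  by rewrite NegzE mulrNz sN sn.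
have spos x : 0 <= x -> 0 <= s x.
  move=> x0; rewrite -(sqr_sqrtr x0) sM -expr2; exact: sqr_ge0.
have smono x y : x <= y -> s x <= s y.
  by move=> xy; rewrite -subr_ge0 -sB; apply: spos; rewrite subr_ge0.
move=> x; apply/eqP; apply/negPn/negP => nx.
set d := `|s x - x|.
have d0 : 0 < d by rewrite normr_gt0 subr_eq0.
pose m := Num.bound (2 / d).
have hm : 2 / d < m%:R by apply: archi_boundP; rewrite divr_ge0 // ltW.
set k := Num.floor (m%:R * x).
have h1 := floor_le (m%:R * x).
have h2 := floorD1_gt (m%:R * x).
have e1 : k%:~R <= m%:R * s x by rewrite -sz -sn -sM; apply: smono.
have e2 : m%:R * s x <= (k+1)%:~R by rewrite -sz -sn -sM; apply: smono; apply: ltW.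
have : m%:R * d <= 1.
  rewrite /d -[m%:R]ger0_norm ?ler0n // -normrM mulrBr.
  rewrite intrD in e2 h2.
  rewrite ler_norml; apply/andP; split; rewrite -/k in h1 h2 *; lra.
have : 2 < m%:R * d by rewrite -ltr_pdivrMr.
lra.
Qed.
Lemma cont_const n (V : rset n) (c : RR) : continuous_on_V (V:=V) (fun _ => c).
Proof. move=> x e e0; exists 1; split => // y _; by rewrite subrr normr0. Qed.

Lemma cont_add n (V : rset n) (f g : pts V -> RR) :
  continuous_on_V f -> continuous_on_V g -> continuous_on_V (fun x => f x + g x).
Proof.
move=> cf cg x e e0.
have e2 : 0 < e / 2 by rewrite divr_gt0.
have [d1 [d10 H1]] := cf x _ e2.
have [d2 [d20 H2]] := cg x _ e2.
exists (Num.min d1 d2); split; first by rewrite lt_min d10 d20.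
move=> y; rewrite lt_min => /andP[y1 y2].
have := H1 _ y1; have := H2 _ y2 => h2 h1.
rewrite (_ : f y + g y - (f x + g x) = (f y - f x) + (g y - g x)); last by ring.
apply: le_lt_trans (ler_normD _ _) _; lra.
Qed.

Lemma cont_mul n (V : rset n) (f g : pts V -> RR) :
  continuous_on_V f -> continuous_on_V g -> continuous_on_V (fun x => f x * g x).
Proof.
move=> cf cg x e e0.
set M := `|f x| + `|g x| + 1.
have M0 : 0 < M by rewrite /M; have := normr_ge0 (f x); have := normr_ge0 (g x); lra.
set e' := Num.min 1 (e / (2 * M)).
have e'0 : 0 < e' by rewrite lt_min ltr01 divr_gt0 // mulr_gt0.
have e'1 : e' <= 1 by rewrite ge_min lexx.
have e'M : e' * M <= e / 2.
  have : e' <= e / (2 * M) by rewrite ge_min lexx orbT.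
  rewrite ler_pdivlMr ?mulr_gt0 // => h; lra.
have [d1 [d10 H1]] := cf x _ e'0.
have [d2 [d20 H2]] := cg x _ e'0.
exists (Num.min d1 d2); split; first by rewrite lt_min d10 d20.
move=> y; rewrite lt_min => /andP[y1 y2].
have := H1 _ y1; have := H2 _ y2 => h2 h1.
rewrite (_ : f y * g y - f x * g x = (f y - f x) * g y + f x * (g y - g x)); last by ring.
apply: le_lt_trans (ler_normD _ _) _; rewrite !normrM.
have hgy : `|g y| <= `|g x| + 1.
  rewrite (_ : g y = g x + (g y - g x)); last by ring.
  apply: le_trans (ler_normD _ _) _; lra.
have := normr_ge0 (f y - f x); have := normr_ge0 (g y - g x);
have := normr_ge0 (g y); have := normr_ge0 (f x); have := normr_ge0 (g x).
rewrite /M in e'M; nra.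
Qed.

Lemma cont_inv n (V : rset n) (f : pts V -> RR) :
  continuous_on_V f -> (forall x, f x != 0) -> continuous_on_V (fun x => 1 / f x).
Proof.
move=> cf nz x e e0.
set c := `|f x|.
have c0 : 0 < c by rewrite normr_gt0.
set e' := Num.min (c / 2) (e * c * c / 2).
have e'0 : 0 < e' by rewrite lt_min !divr_gt0 ?mulr_gt0.
have e'1 : e' <= c / 2 by rewrite ge_min lexx.
have e'2 : e' <= e * c * c / 2 by rewrite ge_min lexx orbT.
have [d [d0 H]] := cf x _ e'0.
exists d; split => // y /H hy.
have fyx : c / 2 <= `|f y|.
  have := lerB_normD (f x) (f y - f x).
  rewrite (_ : f x + (f y - f x) = f y); last by ring.
  rewrite -/c; lra.
have fy0 : f y != 0 by apply: nz.
have fx0 : f x != 0 by apply: nz.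
rewrite (_ : 1 / f y - 1 / f x = (f x - f y) / (f y * f x)); last by field; rewrite fy0 fx0.
rewrite normrM normfV normrM -/c distrC.
rewrite ltr_pdivrMr; last by rewrite mulr_gt0 // normr_gt0.
have := normr_ge0 (f y - f x); nra.
Qed.

Lemma cont_coord n (V : rset n) (i : 'I_n) : continuous_on_V (V:=V) (fun x => sval x i).
Proof.
move=> x e e0; exists (e * e); split; first by rewrite mulr_gt0.
move=> y hy.
have : (sval x i - sval y i) ^+ 2 <= sqdist (sval x) (sval y).
  rewrite /sqdist (bigD1 i) //= lerDl; apply: sumr_ge0 => j _; exact: sqr_ge0.
rewrite ltr_norml expr2 => h; apply/andP; split; nra.
Qed.

Lemma cont_sum n (V : rset n) (I : Type) (r : seq I) (F : I -> pts V -> RR) :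
  (forall i, continuous_on_V (F i)) -> continuous_on_V (fun x => \sum_(i <- r) F i x).
Proof.
move=> cF; elim: r => [|i r IH].
  rewrite (_ : (fun x => _) = fun _ => 0); first exact: cont_const.
  by apply: functional_extensionality => x; rewrite big_nil.
rewrite (_ : (fun x => _) = fun x => F i x + \sum_(j <- r) F j x); first exact: cont_add.
by apply: functional_extensionality => x; rewrite big_cons.
Qed.

Definition ev n (V : rset n) (p : {mpoly RR[n]}) : pts V -> RR := fun x => p.@[sval x].

Lemma polyfun_ev n (V : rset n) p : is_polyfun (ev (V:=V) p).
Proof. by exists p. Qed.

Lemma phi_poly n (V : rset n) (phi : (pts V -> RR) -> RR) :
  ring_hom_on (is_polyfun (V:=V)) phi ->
  (forall c, phi (fun _ => c) = c) /\
  forall p, phi (ev p) = p.@[fun i => phi (fun x => sval x i)].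
Proof.
move=> [hD [hM h1]].
set a := fun i => _.
have cpf c : is_polyfun (V:=V) (fun _ => c) by exists c%:MP => x; rewrite mevalC.
have sc : forall c, phi (fun _ => c) = c.
  apply: ring_endo_id => [x y|x y|//].
  - exact: (hD (fun _ => x) (fun _ => y)).
  - exact: (hM (fun _ => x) (fun _ => y)).
split => //.
pose P p := phi (ev (V:=V) p) = p.@[a].
have PC c : P c%:MP.
  rewrite /P mevalC -{2}(sc c); congr phi; apply: functional_extensionality => x.
  by rewrite /ev mevalC.
have PD p q : P p -> P q -> P (p + q).
  rewrite /P => Pp Pq; rewrite /P in Pp Pq; rewrite mevalD -Pp -Pq; rewrite -(hD (ev p) (ev q) (polyfun_ev V p) (polyfun_ev V q)); congr phi.
  by apply: functional_extensionality => x; rewrite /ev mevalD.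
have PM p q : P p -> P q -> P (p * q).
  rewrite /P => Pp Pq; rewrite /P in Pp Pq; rewrite mevalM -Pp -Pq; rewrite -(hM (ev p) (ev q) (polyfun_ev V p) (polyfun_ev V q)); congr phi.
  by apply: functional_extensionality => x; rewrite /ev mevalM.
have PX i : P 'X_i.
  rewrite /P mevalXU /a; congr phi; apply: functional_extensionality => x.
  by rewrite /ev mevalXU.
move=> p; rewrite -/(P p) (mpolyE p).
apply: (big_ind P); [exact: (PC 0) | exact: (PD) |] => m _.
rewrite -mul_mpolyC; apply: (PM); first exact: PC.
rewrite mpolyXE_id; apply: (big_ind P); [exact: (PC 1)| exact: (PM)|] => i _.
elim: (m i) => [|k IH]; first by rewrite expr0; exact: (PC 1).
  by rewrite exprS; apply: (PM) => //; exact: PX.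
Qed.

Theorem proposition4p2 (n : nat) (V : rset n) :
  is_irreducible V -> is_central V -> is_singular V ->
  forall phi : (pts V -> RR) -> RR, ring_hom_on (is_polyfun (V:=V)) phi ->
    (exists psi, ring_hom_on (is_R0 (V:=V)) psi /\
       forall f, is_polyfun f -> psi f = phi f) /\
    (forall psi1 psi2,
       ring_hom_on (is_R0 (V:=V)) psi1 -> (forall f, is_polyfun f -> psi1 f = phi f) ->
       ring_hom_on (is_R0 (V:=V)) psi2 -> (forall f, is_polyfun f -> psi2 f = phi f) ->
       forall f, is_R0 f -> psi1 f = psi2 f).
Proof.
move=> [Valg _] _ _ phi hphi.
have [sc hev] := phi_poly hphi.
pose a := fun i => phi (fun x : pts V => sval x i).
have Va : V a.
  case: Valg => s hs; apply/hs => p ps.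
  rewrite -hev (_ : ev p = fun _ => 0) ?sc //.
  apply: functional_extensionality => x; rewrite /ev.
  exact: ((hs (sval x)).1 (svalP x) p ps).
pose xa : pts V := exist _ a Va.
have agree f : is_polyfun f -> f xa = phi f.
  move=> [p hp]; have -> : f = ev p by apply: functional_extensionality.
  by rewrite hev.
have uniq psi : ring_hom_on (is_R0 (V:=V)) psi -> (forall f, is_polyfun f -> psi f = phi f) ->
    forall f, is_R0 f -> psi f = f xa.
  move=> [pD [pM p1]] pa f Rf.
  have Rf' := Rf; case: Rf' => cf [W [Walg [[y0 nW0] [p [q hpq]]]]].
  have R0_mk F : continuous_on_V F -> (exists P Q : {mpoly RR[n]}, forall x : pts V,
      ~ W (sval x) -> Q.@[sval x] != 0 /\ F x = P.@[sval x] / Q.@[sval x]) -> is_R0 F.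
    move=> cF [P [Q h]]; split => //; exists W; split => //; split; first by exists y0.
    by exists P, Q.
  have pfc c : is_polyfun (V:=V) (fun _ => c) by exists c%:MP => x; rewrite mevalC.
  have psic c : psi (fun _ => c) = c by rewrite pa // sc.
  have Rc c : is_R0 (V:=V) (fun _ => c).
    apply: R0_mk; first exact: cont_const.
    exists c%:MP, 1 => x _; by rewrite mevalC meval1 divr1 oner_neq0.
  pose c := psi f.
  pose g := fun x => f x + (fun _ : pts V => - c) x.
  pose P := p + (- c)%:MP * q.
  have gP x : ~ W (sval x) -> q.@[sval x] != 0 /\ g x = P.@[sval x] / q.@[sval x].
    move=> nW; have [qn fe] := hpq x nW; split => //.
    rewrite /g fe /P mevalD mevalM mevalC; field; exact: qn.
  have cg : continuous_on_V g by apply: cont_add => //; exact: cont_const.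
  have Rg : is_R0 g by apply: R0_mk => //; exists P, q.
  have pg : psi g = 0 by rewrite /g pD // psic /c subrr.
  case: (eqVneq (g xa) 0) => [ga0|gne].
    by move: ga0; rewrite /g /c => ga0; lra.
  exfalso.
  pose h := fun x : pts V => \sum_(i < n) (sval x i - a i) * (sval x i - a i).
  pose H : {mpoly RR[n]} := \sum_(i < n) ('X_i - (a i)%:MP) * ('X_i - (a i)%:MP).
  have hH : h = ev H.
    apply: functional_extensionality => x; rewrite /ev /H /h.
    rewrite (big_morph _ (mevalD _) (meval0 _)); apply: eq_bigr => i _.
    by rewrite mevalM mevalB mevalXU mevalC.
  have ch : continuous_on_V h.
    rewrite /h; apply: (@cont_sum n V _ _ (fun i x => (sval x i - a i) * (sval x i - a i))) => i.
    apply: (cont_mul (f := fun x => sval x i - a i) (g := fun x => sval x i - a i));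
      exact: (cont_add (cont_coord (V:=V) i) (cont_const (V:=V) (- a i))).
  have Rh : is_R0 h.
    apply: R0_mk => //; exists H, 1 => x _; by rewrite hH meval1 divr1 oner_neq0.
  have ph : psi h = 0.
    rewrite pa; last by rewrite hH; exact: polyfun_ev.
    rewrite hH hev /H (big_morph _ (mevalD _) (meval0 _)); apply: big1 => i _.
    by rewrite mevalM mevalB mevalXU mevalC subrr mulr0.
  pose gg := fun x => g x * g x.
  have cgg : continuous_on_V gg by apply: cont_mul.
  have Rgg : is_R0 gg.
    apply: R0_mk => //; exists (P * P), (q * q) => x nW; have [qn ge] := gP x nW.
    rewrite /gg ge !mevalM mulf_neq0 //; split => //; field; exact: qn.
  pose u := fun x => gg x + h x.
  have cu : continuous_on_V u by apply: cont_add.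
  pose D := P * P + H * (q * q).
  have uD x : ~ W (sval x) -> q.@[sval x] != 0 /\ u x = D.@[sval x] / (q * q).@[sval x].
    move=> nW; have [qn ge] := gP x nW; split => //.
    rewrite /u /gg ge hH /ev /D !(mevalD, mevalM); field; exact: qn.
  have Ru : is_R0 u.
    apply: R0_mk => //; exists D, (q * q) => x nW; have [qn ue] := uD x nW.
    by split; [rewrite mevalM mulf_neq0 | exact: ue].
  have pu : psi u = 0 by rewrite /u pD // pM // pg ph mulr0 addr0.
  have hge x : 0 <= h x by rewrite /h; apply: sumr_ge0 => i _; rewrite -expr2; exact: sqr_ge0.
  have upos x : u x != 0.
    rewrite /u /gg; case: (eqVneq (g x) 0) => [gx0|gx0]; last first.
      have : 0 < g x * g x by rewrite -expr2 exprn_even_gt0.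
      have := hge x; move=> h0 h1; apply/eqP; lra.
    rewrite gx0 mul0r add0r; apply/eqP => hx0.
    have hi : forall i, (sval x i - a i) * (sval x i - a i) = 0.
      move=> i; move: hx0; rewrite /h => hx0.
      apply: (psumr_eq0P _ hx0) => // j _; rewrite -expr2; exact: sqr_ge0.
    have ex : sval x = a.
      apply: functional_extensionality => i; apply/eqP.
      by have := hi i => /eqP; rewrite mulf_eq0 orbb subr_eq0.
    have exa : x = xa.
      apply: eq_sig_hprop => /=; last exact: ex.
      move=> ? ? ?; exact: proof_irrelevance.
    by move: gx0; rewrite exa => gx0; rewrite gx0 eqxx in gne.
  pose v := fun x => 1 / u x.
  have Rv : is_R0 v.
    apply: R0_mk; first exact: cont_inv.
    exists (q * q), D => x nW; have [qn ue] := uD x nW.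
    have qq0 : (q * q).@[sval x] != 0 by rewrite mevalM mulf_neq0.
    have D0 : D.@[sval x] != 0.
      apply/eqP => D0; move: (upos x); rewrite ue D0 mul0r eqxx //.
    split => //; rewrite /v ue; field; apply/andP; split => //; by move: qq0; rewrite mevalM mulf_eq0 negb_or => /andP[].
  have : psi (fun x => u x * v x) = 1.
    rewrite -p1; congr psi; apply: functional_extensionality => x.
    by rewrite /v mul1r mulfV ?upos.
  rewrite pM // pu mul0r => /eqP; rewrite eq_sym oner_eq0 //.
split.
  exists (fun f => f xa); split; last by move=> f /agree.
  by split; [|split].
move=> psi1 psi2 h1 a1 h2 a2 f Rf.
by rewrite (uniq psi1) // (uniq psi2).
Qed.
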